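(* Let $p$ be a prime and $s\geq 2$. Then (i) $\tau_s(1)=(0,p^{s-2},2p^{s-2},\dots,(p-1)p^{s-2})$; (ii) $\tau_s(p^iu)=p^{i-1}(u,u,\dots,u)$ ($p$ copies, computed in $\mathbb{Z}_{p^{s-1}}$) for all $i\in\{1,\dots,s-1\}$ and $u\in\{0,1,\dots,p^{s-1}-1\}$.
   Context: For $r\geq1$ and $u\in\mathbb{Z}_{p^r}$ with $p$-ary expansion $u=\sum_{i=0}^{r-1}u_ip^i$, $\phi_r(u)=(u_{r-1},\dots,u_{r-1})+(u_0,\dots,u_{r-2})Y_{r-1}\in\mathbb{Z}_p^{p^{r-1}}$, where $Y_1=(0\ 1\ \cdots\ p-1)$ and $Y_k$ is the $k\times p^k$ matrix with first $k-1$ rows $(Y_{k-1}\ \cdots\ Y_{k-1})$ ($p$ copies) and last row $(0,\dots,0,1,\dots,1,\dots,p-1,\dots,p-1)$ (blocks of length $p^{k-1}$); $\phi_1=\mathrm{id}$; $\Phi_r$ applies $\phi_r$ coordinatewise and concatenates. $\gamma_s$ is the coordinate permutation of $\mathbb{Z}_p^{p^{s-1}}$ given by $\gamma_s(\mathbf{x})_{j+ip+1}=\mathbf{x}_{jp^{s-2}+i+1}$ for $j\in\{0,\dots,p-1\}$, $i\in\{0,\dots,p^{s-2}-1\}$. The map $\tau_s:\mathbb{Z}_{p^s}\to\mathbb{Z}_{p^{s-1}}^p$ is $\tau_s(u)=\Phi_{s-1}^{-1}(\gamma_s^{-1}(\phi_s(u)))$; in (ii), $p^iu$ is computed in $\mathbb{Z}_{p^s}$.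 *)

(* Defs.v *)
(* Elements of Z_m are represented by their canonical
   representatives in {0,...,m-1} (nat); vectors over Z_m by seq nat or
   finite functions on 'I_p. Coordinates are 0-indexed here (the paper's
   index t corresponds to position t-1). *)
From mathcomp Require Import all_boot all_order.
Set Implicit Arguments. Unset Strict Implicit. Unset Printing Implicit Defensive.

(* Entry (i, c) (0-indexed) of the k x p^k matrix Y_k, defined recursively
   as in the paper: Y_1 = (0 1 ... p-1); the first k-1 rows of Y_k are p
   copies of Y_{k-1} side by side, the last row is
   (0..0, 1..1, ..., p-1..p-1) with blocks of length p^{k-1}. *)
Fixpoint Yent (p k i c : nat) : nat :=
  match k with
  | 0 => 0
  | k'.+1 =>
    match k' with
    | 0 => c
    | _ => if i < k' then Yent p k' i (c %% p ^ k') else c %/ p ^ k'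
    end
  end.

Definition digit (p u i : nat) : nat := (u %/ p ^ i) %% p.

Definition phi (p r u : nat) : seq nat :=
  [seq (digit p u r.-1 + \sum_(i < r.-1) digit p u i * Yent p r.-1 i k) %% p
  | k <- iota 0 (p ^ r.-1)].

Definition Phi (p r : nat) (w : seq nat) : seq nat :=
  flatten [seq phi p r x | x <- w].

(* gamma_s(x)_{j+ip} = x_{j p^{s-2} + i}  (0-indexed) *)
Definition gamma (p s : nat) (x : seq nat) : seq nat :=
  [seq nth 0 x ((m %% p) * p ^ (s - 2) + m %/ p) | m <- iota 0 (p ^ (s - 1))].

Definition gamma_inv (p s : nat) (y : seq nat) : seq nat :=
  [seq nth 0 y (m %/ p ^ (s - 2) + (m %% p ^ (s - 2)) * p)
  | m <- iota 0 (p ^ (s - 1))].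

(* tau_s(u) = Phi_{s-1}^{-1}(gamma_s^{-1}(phi_s(u))) in Z_{p^{s-1}}^p;
   the preimage under Phi_{s-1} is chosen with [pick] (None if none exists). *)
Definition tau (p s u : nat) : option {ffun 'I_p -> 'I_(p ^ (s - 1))} :=
  [pick w : {ffun 'I_p -> 'I_(p ^ (s - 1))} |
     Phi p (s - 1) [seq val (w j) | j <- enum 'I_p] == gamma_inv p s (phi p s u)].

(* Main.v *)
Require Import Defs.
From mathcomp Require Import all_boot all_order.
From mathcomp Require Import zify.
Set Implicit Arguments. Unset Strict Implicit. Unset Printing Implicit Defensive.

Lemma YentS p k i c : Yent p k.+2 i c =
  if i < k.+1 then Yent p k.+1 i (c %% p ^ k.+1) else c %/ p ^ k.+1.
Proof. by []. Qed.

Lemma Yent0 p k i : Yent p k i 0 = 0.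
Proof.
elim: k i => [|[|k] IH] i //.
rewrite YentS; case: ifP => _; last by rewrite div0n.
by rewrite mod0n IH.
Qed.

Lemma digit_mod p c k l : 0 < p -> l < k -> digit p (c %% p ^ k) l = digit p c l.
Proof.
move=> p0 lk; rewrite /digit.
have -> : p ^ k = p ^ l * p ^ (k - l) by rewrite -expnD subnKC // ltnW.
rewrite divn_modl ?dvdn_mulr // mulKn ?expn_gt0 ?p0 //.
rewrite modn_dvdm //.
have [d ->] : exists d, k - l = d.+1 by exists (k - l).-1; rewrite prednK // subn_gt0.
by rewrite expnS dvdn_mulr.
Qed.

Lemma Yent_digit p k i c : 0 < p -> i < k -> c < p ^ k -> Yent p k i c = digit p c i.
Proof.
move=> p0; elim: k i c => [|[|k] IH] i c //.
  rewrite /= ltnS leqn0 => /eqP -> ; rewrite expn1 => cp.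
  by rewrite /digit expn0 divn1 modn_small.
move=> ik ck; rewrite YentS.
case: ifP => ik'.
  by rewrite IH ?digit_mod // ltn_pmod ?expn_gt0 ?p0.
have -> : i = k.+1 by apply/eqP; rewrite eqn_leq -ltnS ik leqNgt ik'.
rewrite /digit modn_small // ltn_divLR ?expn_gt0 ?p0 // -expnSr //.
Qed.

Lemma digit_lt p c i : 0 < p -> digit p c i < p.
Proof. by move=> p0; rewrite /digit ltn_pmod. Qed.

Lemma size_phi p r a : size (phi p r a) = p ^ r.-1.
Proof. by rewrite /phi size_map size_iota. Qed.

Lemma nth_phi p r a k : k < p ^ r.-1 ->
  nth 0 (phi p r a) k = (digit p a r.-1 + \sum_(i < r.-1) digit p a i * Yent p r.-1 i k) %% p.
Proof. by move=> kl; rewrite /phi (nth_map 0) ?size_iota // nth_iota. Qed.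

Lemma digits_eq p r a b : 0 < p -> a < p ^ r -> b < p ^ r ->
  (forall i, i < r -> digit p a i = digit p b i) -> a = b.
Proof.
move=> p0; elim: r a b => [|r IH] a b.
  by rewrite expn0 !ltnS !leqn0 => /eqP -> /eqP ->.
move=> ar br H.
rewrite (divn_eq a p) (divn_eq b p).
have := H 0 isT; rewrite /digit !expn0 !divn1 => ->.
congr (_ * _ + _); apply: IH.
- by rewrite ltn_divLR // -expnSr.
- by rewrite ltn_divLR // -expnSr.
move=> i ir; have := H i.+1 ir; rewrite /digit expnS divnMA.
by rewrite [in X in X -> _]divnMA.
Qed.

Lemma digit_pow p i l : 1 < p -> digit p (p ^ i) l = (l == i).
Proof.
move=> p1; have p0 : 0 < p by apply: ltnW.
rewrite /digit; case: ltngtP => H.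
- rewrite -expnB; last by apply: ltnW. 2: by [].
  have [d ->] : exists d, i - l = d.+1 by exists (i - l).-1; rewrite prednK // subn_gt0.
  by rewrite expnS modnMr.
- by rewrite divn_small ?mod0n // ltn_exp2l.
- by rewrite H divnn expn_gt0 p0 /= modn_small.
Qed.

Lemma sum_pick p n a i : 1 < p -> i < n ->
  \sum_(l < n) digit p a l * Yent p n l (p ^ i) = digit p a i.
Proof.
move=> p1 ilt; have p0 : 0 < p by apply: ltnW.
rewrite (bigD1 (Ordinal ilt)) //= big1 ?addn0.
  by rewrite Yent_digit // ?ltn_exp2l // digit_pow // eqxx muln1.
move=> l /eqP lne; rewrite Yent_digit // ?ltn_exp2l // digit_pow //.
suff -> : (nat_of_ord l == i) = false by rewrite muln0.
apply/eqP => E; apply: lne; exact: val_inj.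
Qed.

Lemma phi_inj p n a b : 1 < p -> a < p ^ n.+1 -> b < p ^ n.+1 ->
  phi p n.+1 a = phi p n.+1 b -> a = b.
Proof.
move=> p1 ap bp E; have p0 : 0 < p by apply: ltnW.
have top : digit p a n = digit p b n.
  have := congr1 (fun s => nth 0 s 0) E => /=.
  rewrite !nth_phi ?expn_gt0 ?p0 //=.
  rewrite !big1 ?addn0 ?modn_small ?digit_lt // => l _; by rewrite Yent0 muln0.
apply: (digits_eq p0 ap bp) => i; rewrite ltnS leq_eqVlt => /orP [/eqP -> //|ilt].
have := congr1 (fun s => nth 0 s (p ^ i)) E => /=.
rewrite !nth_phi ?ltn_exp2l //= !sum_pick // top => /eqP.
by rewrite eqn_modDl !modn_small ?digit_lt // => /eqP.
Qed.

Lemma flatten_iota (F : nat -> nat -> nat) L (w : seq nat) (g : nat -> nat) :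
  (forall j t, j < size w -> t < L -> F (nth 0 w j) t = g (j * L + t)) ->
  flatten [seq map (F x) (iota 0 L) | x <- w] = map g (iota 0 (size w * L)).
Proof.
elim: w g => [|x w IH] g H //=.
rewrite mulSn iotaD map_cat add0n; congr (_ ++ _).
  apply/eq_in_map => t; rewrite mem_iota add0n => tL.
  by have := H 0 t isT tL; rewrite mul0n add0n.
have -> : iota L (size w * L) = map (addn L) (iota 0 (size w * L)) by rewrite -iotaDl addn0.
rewrite -map_comp; apply: IH => j t jw tL.
by have := H j.+1 t jw tL; rewrite /= mulSn addnA.
Qed.

Lemma map_enum_inj (T : Type) p (f g : 'I_p -> T) :
  [seq f j | j <- enum 'I_p] = [seq g j | j <- enum 'I_p] -> forall j, f j = g j.
Proof.
move=> E j.
have H : forall h : 'I_p -> T, nth (f j) [seq h j | j <- enum 'I_p] (index j (enum 'I_p)) = h j.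
  by move=> h; rewrite (nth_map j) ?index_mem ?mem_enum // nth_index ?mem_enum.
by rewrite -(H f) -(H g) E.
Qed.

Lemma Phi_inj p n (w1 w2 : {ffun 'I_p -> 'I_(p ^ n.+1)}) : 1 < p ->
  Phi p n.+1 [seq val (w1 j) | j <- enum 'I_p] = Phi p n.+1 [seq val (w2 j) | j <- enum 'I_p] ->
  w1 = w2.
Proof.
move=> p1 E.
have sh : forall w : {ffun 'I_p -> 'I_(p ^ n.+1)},
   shape [seq phi p n.+1 x | x <- [seq val (w j) | j <- enum 'I_p]] = [seq p ^ n | _ <- enum 'I_p].
  by move=> w; rewrite /shape -!map_comp; apply: eq_map => j /=; rewrite size_phi.
have E2 := congr1 (reshape [seq p ^ n | _ <- enum 'I_p]) E.
rewrite /Phi -{1}(sh w1) -(sh w2) !flattenK in E2.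
apply/ffunP => j; apply: val_inj; apply: (phi_inj p1 (ltn_ord _) (ltn_ord _)).
move: E2; rewrite -(map_comp (phi p n.+1) (fun j => val (w1 j))) -(map_comp (phi p n.+1) (fun j => val (w2 j))).
by move/map_enum_inj; apply.
Qed.

Lemma digit_shift p j t l : j < p -> digit p (j + t * p) l.+1 = digit p t l.
Proof.
move=> jp; have p0 : 0 < p by apply: leq_ltn_trans jp.
by rewrite /digit expnS divnMA addnC divnMDl // (divn_small jp) addn0.
Qed.

Lemma tau_spec p n u (g : nat -> nat) : prime p ->
  (forall j, j < p -> g j < p ^ n.+1) ->
  (forall j t, j < p -> t < p ^ n ->
     (digit p (g j) n + \sum_(l < n) digit p (g j) l * digit p t l) %% p
     = (digit p u n.+1 + (digit p u 0 * j + \sum_(l < n) digit p u l.+1 * digit p t l)) %% p) ->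
  exists w, tau p n.+2 u = Some w /\ forall j : 'I_p, val (w j) = g j.
Proof.
move=> pp gl Hc; have p1 : 1 < p := prime_gt1 pp; have p0 : 0 < p by apply: ltnW.
pose w0 : {ffun 'I_p -> 'I_(p ^ (n.+2 - 1))} := [ffun j : 'I_p => Ordinal (gl j (ltn_ord j))].
have P0 : Phi p (n.+2 - 1) [seq val (w0 j) | j <- enum 'I_p] == gamma_inv p n.+2 (phi p n.+2 u).
  apply/eqP.
  have -> : [seq val (w0 j) | j <- enum 'I_p] = map g (iota 0 p).
    by rewrite -val_enum_ord -map_comp; apply: eq_map => j; rewrite /= ffunE.
  have phiE : forall x, phi p (n.+2 - 1) x =
     map (fun k => (digit p x n + \sum_(i < n) digit p x i * Yent p n i k) %% p) (iota 0 (p ^ n)).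
    by [].
  have gE : gamma_inv p n.+2 (phi p n.+2 u) =
     map (fun m => nth 0 (phi p n.+2 u) (m %/ p ^ n + (m %% p ^ n) * p)) (iota 0 (p * p ^ n)).
    by rewrite /gamma_inv -expnS (_ : n.+2 - 2 = n) // !subSS subn0.
  rewrite gE /Phi (eq_map phiE).
  have sz : size (map g (iota 0 p)) = p by rewrite size_map size_iota.
  have -> : p * p ^ n = size (map g (iota 0 p)) * p ^ n by rewrite sz.
  apply: (@flatten_iota (fun x k => (digit p x n + \sum_(i < n) digit p x i * Yent p n i k) %% p) (p ^ n) (map g (iota 0 p)) (fun m => nth 0 (phi p n.+2 u) (m %/ p ^ n + (m %% p ^ n) * p))).
  move=> j t; rewrite sz => jp tp.
  rewrite (nth_map 0) ?size_iota // nth_iota // add0n.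
  have pn0 : 0 < p ^ n by rewrite expn_gt0 p0.
  rewrite divnMDl // (divn_small tp) addn0 modnMDl (modn_small tp).
  have jt : j + t * p < p ^ n.+1.
    rewrite expnSr.
    have : t.+1 * p <= p ^ n * p by rewrite leq_mul2r tp orbT.
    rewrite mulSn; lia.
  rewrite nth_phi // big_ord_recl.
  rewrite (@Yent_digit p n.+1 0) //.
  have d0 : digit p (j + t * p) 0 = j by rewrite /digit expn0 divn1 addnC modnMDl modn_small.
  rewrite d0.
  transitivity ((digit p (g j) n + \sum_(l < n) digit p (g j) l * digit p t l) %% p).
    congr ((_ + _) %% p); apply: eq_bigr => l _; by rewrite Yent_digit.
  rewrite Hc //; congr ((_ + (_ + _)) %% p).
  apply: eq_bigr => l _; rewrite lift0 Yent_digit ?digit_shift //.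
  by rewrite /= ltnS.
rewrite /tau; case: (pickP (fun w : {ffun 'I_p -> 'I_(p ^ (n.+2 - 1))} => Phi p (n.+2 - 1) [seq val (w j) | j <- enum 'I_p] == gamma_inv p n.+2 (phi p n.+2 u))) => [w Hw | H]; last by rewrite H in P0.
exists w; split => //.
have -> : w = w0 by apply: (Phi_inj p1); rewrite (eqP Hw) (eqP P0).
by move=> j; rewrite ffunE.
Qed.

Lemma digit1 p i : 1 < p -> digit p 1 i = (i == 0).
Proof. by move=> p1; rewrite -(expn0 p) digit_pow // expn0. Qed.

Theorem lemma4 (p s : nat) :
  prime p -> 2 <= s ->
  (exists w, tau p s 1 = Some w /\
     forall j : 'I_p, val (w j) = j * p ^ (s - 2)) /\
  (forall i u, 1 <= i <= s - 1 -> u < p ^ (s - 1) ->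
     exists w, tau p s ((p ^ i * u) %% p ^ s) = Some w /\
       forall j : 'I_p, val (w j) = (p ^ (i - 1) * u) %% p ^ (s - 1)).
Proof.
move=> pp; case: s => [|[|n]] // _.
have p1 : 1 < p := prime_gt1 pp; have p0 : 0 < p by apply: ltnW.
have e2 : n.+2 - 2 = n by rewrite !subSS subn0.
have e1 : n.+2 - 1 = n.+1 by rewrite subSS subn0.
split.
  rewrite e2; apply: (tau_spec (g := fun j => j * p ^ n)) => // [j jp|j t jp tp].
    by rewrite expnS ltn_pmul2r ?expn_gt0 ?p0.
  rewrite !digit1 // add0n mul1n [in RHS]big1 ?addn0; last by move=> l _; rewrite digit1.
  rewrite big1 ?addn0; last first.
    move=> [l ln] _; rewrite /digit /=.
    have [d ->] : exists d, n = l + d.+1.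
      by exists (n - l).-1; rewrite prednK ?subn_gt0 // subnKC // ltnW.
    by rewrite expnD (mulnC (p ^ l)) mulnA mulnK ?expn_gt0 ?p0 // expnS mulnCA modnMr mul0n.
  by rewrite /digit mulnK ?expn_gt0 ?p0 // !modn_small.
move=> i u /andP [i1 _] _.
have key : (p ^ i * u) %% p ^ n.+2 = p * ((p ^ (i - 1) * u) %% p ^ n.+1).
  by rewrite muln_modr mulnA -expnS -expnS subn1 prednK.
rewrite key; apply: (tau_spec (g := fun _ => (p ^ (i - 1) * u) %% p ^ (n.+2 - 1))) => // [j jp|j t jp tp]; rewrite e1.
  by rewrite ltn_pmod ?expn_gt0 ?p0.
set v := (p ^ (i - 1) * u) %% p ^ n.+1.
have dS : forall l, digit p (p * v) l.+1 = digit p v l.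
  by move=> l; rewrite /digit expnS divnMl.
have d0 : digit p (p * v) 0 = 0 by rewrite /digit expn0 divn1 modnMr.
rewrite dS d0 mul0n add0n.
by under [in RHS]eq_bigr => l _ do rewrite dS.
Qed.
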